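(* Let $x_s<x_t$ be integers, let $C\ge 0$, and let $f:[x_s,x_t]\to\mathbb{R}$ be such that $([x_s,x_t],f)$ is an Ameso($C$) pair. If there exist $x'\in[x_s,x_t]$ and $z\in(x',x_t]$ with $f(z)-f(x')\ge C$, then $\min_{y\in[x_s,z]}f(y)=\min_{y\in[x_s,x_t]}f(y)$.
   Context: For integers $a\le b$, $[a,b]$ denotes the set of integers $\{a,\dots,b\}$ and $(a,b]$ the set $\{a+1,\dots,b\}$. Floors and ceilings of vectors are taken componentwise. A set $D^n\subseteq\mathbb{Z}^n$ is an Ameso set if $\lceil(\vec x+\vec y)/2\rceil,\lfloor(\vec x+\vec y)/2\rfloor\in D^n$ for all $\vec x,\vec y\in D^n$. For $C\ge 0$, $(D^n,f)$ is an Ameso($C$) pair if $D^n$ is an Ameso set, $f:D^n\to\mathbb{R}$ is bounded below, and $f(\vec x)+f(\vec y)+C\ge f(\lceil(\vec x+\vec y)/2\rceil)+f(\lfloor(\vec x+\vec y)/2\rfloor)$ for all $\vec x,\vec y\in D^n$. *)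

(* Defs.v *)
(* One-dimensional (n = 1) instance of the Ameso notions. *)
From HB Require Import structures.
From mathcomp Require Import all_boot all_order all_algebra.
Set Implicit Arguments. Unset Strict Implicit. Unset Printing Implicit Defensive.
Import Order.TTheory GRing.Theory Num.Theory.
Local Open Scope ring_scope.

Definition floor_mid (x y : int) : int := ((x + y) %/ 2)%Z.
Definition ceil_mid (x y : int) : int := - (((- (x + y)) %/ 2)%Z).

Definition int_itv (a b : int) : pred int := fun x => (a <= x) && (x <= b).

Definition ameso_set (D : pred int) : Prop :=
  forall x y, D x -> D y -> D (ceil_mid x y) /\ D (floor_mid x y).

(* Ameso(C) pair (n = 1); f is a total function on int, only its values on D matter *)
Definition ameso_pair (R : realFieldType) (C : R) (D : pred int) (f : int -> R) : Prop :=
  [/\ ameso_set D,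
      (exists m : R, forall x, D x -> m <= f x) &
      forall x y, D x -> D y ->
        f (ceil_mid x y) + f (floor_mid x y) <= f x + f y + C].

(* min_{y in [a,b]} f y  (for a <= b) *)
Definition int_min (R : realFieldType) (f : int -> R) (a b : int) : R :=
  \big[Num.min/f a]_(i < (`|b - a|%N).+1) f (a + (i : nat)%:Z).

(* Main.v *)
Require Import Defs.
From mathcomp Require Import all_boot all_order all_algebra zify ring lra.
Import Order.TTheory GRing.Theory Num.Theory.
Local Open Scope ring_scope.
Set Implicit Arguments.

Lemma int_min_le (R : realFieldType) (f : int -> R) a b y :
  a <= y <= b -> int_min f a b <= f y.
Proof.
move=> /andP[ay yb].
have hi : (`|y - a|%N < (`|b - a|%N).+1)%N by lia.
rewrite /int_min (bigD1 (Ordinal hi)) //= ge_min; apply/orP; left.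
have -> : a + (`|y - a|%N)%:Z = y by lia.
by [].
Qed.

Lemma int_min_ex (R : realFieldType) (f : int -> R) a b :
  a <= b -> exists2 y, a <= y <= b & int_min f a b = f y.
Proof.
move=> ab; rewrite /int_min.
elim/big_rec: _ => [|i v _ [y hy ->]].
  by exists a; rewrite ?lexx ?ab.
have hi := ltn_ord i.
case: (leP (f (a + (i : nat)%:Z)) (f y)) => h.
  exists (a + (i:nat)%:Z); first by apply/andP; split; lia.
  by rewrite /Num.min; case: leP h.
by exists y => //; rewrite /Num.min; case: leP h => // h1 h2; have := lt_le_trans h2 h1; rewrite ltxx.
Qed.

Lemma mid2 (u w z : int) : u + w = z * 2 -> floor_mid u w = z /\ ceil_mid u w = z.
Proof.
move=> e; rewrite /floor_mid /ceil_mid e; split; first by rewrite mulzK.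
by rewrite -mulNr mulzK // opprK.
Qed.

Definition cnt {R : realFieldType} (f : int -> R) (L : int) (K : nat) (y : int) : nat :=
  (\sum_(i < K.+1) nat_of_bool (f y < f (L + (i : nat)%:Z))%R)%N.

Lemma cnt_le (R : realFieldType) (f : int -> R) L K y w :
  f y <= f w -> (cnt f L K w <= cnt f L K y)%N.
Proof.
move=> h; apply: leq_sum => i _.
by case: (f w < _) /idP => // h1; rewrite (le_lt_trans h h1).
Qed.

Lemma cnt_lt (R : realFieldType) (f : int -> R) L K y u :
  L <= u -> u <= L + K%:Z -> f y < f u -> (cnt f L K u < cnt f L K y)%N.
Proof.
move=> h1 h2 h.
have hi : (`|u - L|%N < K.+1)%N by lia.
rewrite /cnt (bigD1 (Ordinal hi)) // [X in (_ < X)%N](bigD1 (Ordinal hi)) //=.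
have -> : L + (`|u - L|%N)%:Z = u by lia.
rewrite ltxx h add0n add1n ltnS; apply: leq_sum => i _.
by case: (f u < _) /idP => // h3; rewrite (lt_trans h h3).
Qed.

Lemma key (R : realFieldType) (C : R) (f : int -> R) (xs xt L Rr : int) :
  0 <= C ->
  (forall x y, xs <= x <= xt -> xs <= y <= xt ->
     f (ceil_mid x y) + f (floor_mid x y) <= f x + f y + C) ->
  xs <= L -> Rr <= xt -> L < Rr -> f Rr < f L ->
  forall z, L < z < Rr -> f z < f L + C.
Proof.
move=> hC ineq hL hR hLR hf z hz; rewrite ltNge; apply/negP => Hz.
have E : forall u w y, u + w = y * 2 -> L <= u <= Rr -> L <= w <= Rr ->
    f y + f y <= f u + f w + C.
  move=> u w y e /andP[h1 h2] /andP[h3 h4].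
  have [e1 e2] := @mid2 u w y e.
  by have := ineq u w; rewrite e1 e2; apply; apply/andP; split; lia.
pose K := `|Rr - L|%N.
suff: forall n d z, (cnt f L K z <= n)%N -> (`|Rr - z| <= d)%N ->
   L < z < Rr -> f L + C <= f z -> False.
  by move=> /(_ _ _ z (leqnn _) (leqnn _) hz Hz).
clear z hz Hz.
elim/ltn_ind => n IHn; elim => [|d IHd] z hn hd hz Hz.
  lia.
case: (ltgtP (z - L) (Rr - z)) => hc.
-
  pose w := z * 2 - L.
  have hw : f z <= f w.
    have := E L w z ltac:(rewrite /w; ring) ltac:(apply/andP; split; lia)
       ltac:(apply/andP; split; rewrite /w; lia).
    lra.
  apply: (IHd w); [|lia| rewrite /w; apply/andP; split; lia|lra].
  apply: (leq_trans _ hn); exact: cnt_le.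
-
  pose u := z * 2 - Rr.
  have hu : f z < f u.
    have := E u Rr z ltac:(rewrite /u; ring) ltac:(apply/andP; split; rewrite /u; lia)
       ltac:(apply/andP; split; lia).
    lra.
  have hlt := @cnt_lt R f L K z u ltac:(rewrite /u; lia) ltac:(rewrite /u /K; lia) hu.
  apply: (IHn (cnt f L K u) _ `|Rr - u|%N u (leqnn _) (leqnn _)); [lia|rewrite /u; apply/andP; split; lia|lra].
- have := E L Rr z ltac:(lia) ltac:(apply/andP; split; lia) ltac:(apply/andP; split; lia).
  lra.
Qed.

Unset Implicit Arguments.

Theorem corollary2 (R : realFieldType) (xs xt : int) (C : R) (f : int -> R)
    (x' z : int) :
  xs < xt -> 0 <= C ->
  ameso_pair C (int_itv xs xt) f ->
  xs <= x' <= xt -> x' < z <= xt -> f z - f x' >= C ->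
  int_min f xs z = int_min f xs xt.
Proof.
move=> hst hC [_ _ ineq] /andP[h1 h2] /andP[h3 h4] hfz.
have ineq' : forall x y, xs <= x <= xt -> xs <= y <= xt ->
     f (ceil_mid x y) + f (floor_mid x y) <= f x + f y + C.
  by move=> x y hx hy; apply: ineq.
have [y1 /andP[hy1 hy1'] e1] := @int_min_ex R f _ _ (ltac:(lia) : xs <= z).
have [w /andP[hw hw'] e2] := @int_min_ex R f _ _ (ltac:(lia) : xs <= xt).
apply/eqP; rewrite eq_le; apply/andP; split; last first.
  by rewrite e1; apply: int_min_le; apply/andP; split; lia.
case: (leP w z) => hwz.
  by rewrite e2; apply: int_min_le; apply/andP; split; lia.
rewrite leNgt; apply/negP => hlt.
have hx : int_min f xs z <= f x' by apply: int_min_le; apply/andP; split; lia.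
have := @key R C f xs xt x' w hC ineq' h1 hw' (ltac:(lia) : x' < w) ltac:(rewrite -e2; exact: lt_le_trans hlt hx) z
  ltac:(apply/andP; split; lia).
lra.
Qed.
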